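(* Let $\alpha>0$, $\ell>0$, $p\in\mathbb{N}$, and set $a=\frac{1}{1+\alpha}\in(0,1)$, $\theta=\frac{\ell}{1+\alpha}>0$. For every $N\ge1$, the random partition of $\{1,\dots,N\}$ produced at time $N$ by the Chinese restaurant process with competition with parameters $a,\theta,p$ has the same law as the branch partition of $\{1,\dots,N\}$ of the modified GPORT with immigration $\mathcal{T}_{\alpha,\ell}$ with period $p$ after $N$ insertions. (Indeed the two sequences of partitions, indexed by $N$, have the same law.)
   Context: Chinese restaurant process with competition (parameters $0<a<1$, $\theta>0$, $p\in\mathbb{N}$): at time $1$ the partition is $\{\{1\}\}$. For $N\ge1$ write $N=np+k$, $0\le k<p$, and $c_N=N+(n+1)\theta$. Given a partition of $\{1,\dots,N\}$ with $m$ blocks $t_1,\dots,t_m$, element $N+1$ joins block $t_i$ with probability $(|t_i|-a)/c_N$ and forms a new singleton block with probability $((n+1)\theta+ma)/c_N$. Modified GPORT with immigration $\mathcal{T}_{\alpha,\ell}$: at time $0$ there is a single root labelled $0$. At time $N$ the forest has ordinary nodes $1,\dots,N$, the root $0$, and $\lfloor N/p\rfloor$ immigrant roots. Node $N+1$ attaches to an ordinary node $v$ with probability $(d(v)+\alpha)/C_N$ and to a root $v$ (root $0$ or an immigrant root) with probability $(d(v)+\ell)/C_N$, where $d(v)$ is the out-degree and $C_N=(1+\alpha)N+(\lfloor N/p\rfloor+1)\ell$; after node $N+1$ is attached, if $p\mid(N+1)$ a new isolated immigrant root is added. The branch partition of $\{1,\dots,N\}$ has as blocks the label sets of the subtrees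 rooted at the children of the roots. *)

(* Defs.v *)
From HB Require Import structures.
From mathcomp Require Import all_boot all_order all_algebra.
Set Implicit Arguments. Unset Strict Implicit. Unset Printing Implicit Defensive.
Import Order.TTheory GRing.Theory Num.Theory.
Local Open Scope ring_scope.

(* Finitely supported laws are represented as lists of (weight, history)
   pairs; a history is the full sequence of random choices made so far, so the
   state of the process at time k is the prefix of length k of the history. *)

(* ---------- Partitions of {1,...,n} ----------
   Element x : 'I_n represents the integer x+1.  Given a "key" function on
   {1,...,n}, the partition whose blocks are the level sets of the key. *)
Definition part_of_key (n : nat) (key : nat -> nat) : {set {set 'I_n}} :=
  [set [set y : 'I_n | key y.+1 == key x.+1] | x : 'I_n].

(* ---------- Chinese restaurant process with competition ----------
   History s : seq nat; s`_(i-1) is the index of the block containing i,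
   blocks being numbered 0,1,2,... in order of creation. *)
Definition nblocks (s : seq nat) : nat := size (undup s).

(* probability that element N+1 makes choice c, given the history s of
   length N (c < nblocks s : join block c ; c = nblocks s : new block) *)
Definition crp_prob (R : realFieldType) (a theta : R) (p N : nat)
    (s : seq nat) (c : nat) : R :=
  let n := (N %/ p)%N in
  let cN := N%:R + (n + 1)%:R * theta in
  if (c < nblocks s)%N then ((count_mem c s)%:R - a) / cN
  else ((n + 1)%:R * theta + (nblocks s)%:R * a) / cN.

Definition crp_step (R : realFieldType) (a theta : R) (p N : nat)
    (l : seq (R * seq nat)) : seq (R * seq nat) :=
  flatten [seq [seq (x.1 * crp_prob a theta p N x.2 c, rcons x.2 c)
               | c <- iota 0 (nblocks x.2).+1] | x <- l].

(* law of the history at time N (meaningful for N >= 1) *)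
Fixpoint crp_dist (R : realFieldType) (a theta : R) (p N : nat)
    : seq (R * seq nat) :=
  match N with
  | 0 => [:: (1, [::])]
  | 1 => [:: (1, [:: 0%N])]
  | S (S _ as M) => crp_step a theta p M (crp_dist a theta p M)
  end.

Definition crp_key (s : seq nat) (i : nat) : nat := nth 0%N s i.-1.

Definition crp_part (k : nat) (s : seq nat) : {set {set 'I_k}} :=
  part_of_key k (crp_key (take k s)).

(* ---------- Modified GPORT with immigration ----------
   Vertices: inl j = root j (j = 0 is the root 0, j >= 1 immigrant roots),
             inr i = ordinary node i (i >= 1).
   History par : seq (nat + nat); par`_(i-1) is the vertex node i attached to. *)
Definition vertex := (nat + nat)%type.

(* vertices present at time N (before attaching node N+1) *)
Definition vertices (p N : nat) : seq vertex :=
  [seq inl j | j <- iota 0 (N %/ p).+1] ++ [seq inr i | i <- iota 1 N].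

Definition gport_prob (R : realFieldType) (alpha ell : R) (p N : nat)
    (par : seq vertex) (v : vertex) : R :=
  let CN := (1 + alpha) * N%:R + ((N %/ p)%N + 1)%:R * ell in
  let d := count_mem v par in
  match v with
  | inl _ => (d%:R + ell) / CN
  | inr _ => (d%:R + alpha) / CN
  end.

Definition gport_step (R : realFieldType) (alpha ell : R) (p N : nat)
    (l : seq (R * seq vertex)) : seq (R * seq vertex) :=
  flatten [seq [seq (x.1 * gport_prob alpha ell p N x.2 v, rcons x.2 v)
               | v <- vertices p N] | x <- l].

Fixpoint gport_dist (R : realFieldType) (alpha ell : R) (p N : nat)
    : seq (R * seq vertex) :=
  match N with
  | 0 => [:: (1, [::])]
  | M.+1 => gport_step alpha ell p M (gport_dist alpha ell p M)
  end.

Fixpoint branch_top (fuel : nat) (par : seq vertex) (i : nat) : nat :=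
  match fuel with
  | 0 => i
  | f.+1 => match nth (inl 0%N) par i.-1 with
            | inl _ => i
            | inr j => branch_top f par j
            end
  end.

Definition gport_key (par : seq vertex) (i : nat) : nat := branch_top i par i.

Definition gport_part (k : nat) (par : seq vertex) : {set {set 'I_k}} :=
  part_of_key k (gport_key (take k par)).

Definition crp_law (R : realFieldType) (a theta : R) (p N : nat)
    (P : {set {set 'I_N}}) : R :=
  \sum_(x <- crp_dist a theta p N) x.1 * (crp_part N x.2 == P)%:R.

Definition gport_law (R : realFieldType) (alpha ell : R) (p N : nat)
    (P : {set {set 'I_N}}) : R :=
  \sum_(x <- gport_dist alpha ell p N) x.1 * (gport_part N x.2 == P)%:R.

Definition crp_path_law (R : realFieldType) (a theta : R) (p N : nat)
    (rho : forall k : 'I_N, {set {set 'I_k.+1}}) : R :=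
  \sum_(x <- crp_dist a theta p N)
     x.1 * [forall k : 'I_N, crp_part k.+1 x.2 == rho k]%:R.

Definition gport_path_law (R : realFieldType) (alpha ell : R) (p N : nat)
    (rho : forall k : 'I_N, {set {set 'I_k.+1}}) : R :=
  \sum_(x <- gport_dist alpha ell p N)
     x.1 * [forall k : 'I_N, gport_part k.+1 x.2 == rho k]%:R.

Arguments crp_law {R} a theta p N P.
Arguments gport_law {R} alpha ell p N P.
Arguments crp_path_law {R} a theta p N rho.
Arguments gport_path_law {R} alpha ell p N rho.

(* Main.v *)
Require Import Defs.
From HB Require Import structures.
From mathcomp Require Import all_boot all_order all_algebra.
From mathcomp Require Import ring.
Import Order.TTheory GRing.Theory Num.Theory.
Local Open Scope ring_scope.
Set Implicit Arguments. Unset Strict Implicit.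

Definition is_inl (v : vertex) : bool := if v is inl _ then true else false.
Definition lab (s : seq nat) (v : vertex) : nat :=
  match v with inl _ => nblocks s | inr j => nth 0%N s j.-1 end.
Definition fm (par : seq vertex) : seq nat :=
  foldl (fun acc v => rcons acc (lab acc v)) [::] par.

Lemma fm_rcons par v : fm (rcons par v) = rcons (fm par) (lab (fm par) v).
Proof. by rewrite /fm foldl_rcons. Qed.

Lemma size_fm par : size (fm par) = size par.
Proof. by elim/last_ind: par => [|q v IH] //; rewrite fm_rcons !size_rcons IH. Qed.

Lemma take_fm k par : take k (fm par) = fm (take k par).
Proof.
elim/last_ind: par => [|q v IH]; first by case: k.
case: (leqP k (size q)) => hk.
  by rewrite fm_rcons -!cats1 !takel_cat ?size_fm.
by rewrite !take_oversize ?size_fm ?size_rcons.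
Qed.

Lemma nth_fm par i : (i < size par)%N ->
  nth 0%N (fm par) i = lab (fm (take i par)) (nth (inl 0%N) par i).
Proof.
move=> hi.
rewrite -(nth_take 0%N (ltnSn i)) take_fm (take_nth (inl 0%N) hi) fm_rcons.
by rewrite nth_rcons size_fm size_take hi ltnn eqxx.
Qed.

Definition valid p (par : seq vertex) :=
  forall i, (i < size par)%N -> nth (inl 0%N) par i \in vertices p i.

Lemma inl_inj' : injective (@inl nat nat). Proof. by move=> x y []. Qed.
Lemma inr_inj' : injective (@inr nat nat). Proof. by move=> x y []. Qed.

Lemma mem_vertices p N v : (v \in vertices p N) =
  match v with inl j => (j <= N %/ p)%N | inr j => (0 < j <= N)%N end.
Proof.
case: v => j; rewrite mem_cat.
  rewrite (mem_map inl_inj') mem_iota add0n ltnS.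
  have -> : (inl j \in [seq (inr i : vertex) | i <- iota 1 N]) = false.
    by apply/negbTE/mapP => -[x _].
  by rewrite orbF.
rewrite (mem_map inr_inj') mem_iota add1n ltnS.
have -> : (inr j \in [seq (inl i : vertex) | i <- iota 0 (N %/ p).+1]) = false.
  by apply/negbTE/mapP => -[x _].
by [].
Qed.

Lemma valid_rcons p q v : valid p (rcons q v) <-> valid p q /\ v \in vertices p (size q).
Proof.
split.
  move=> h; split.
    move=> i hi; have := h i; rewrite size_rcons nth_rcons hi; apply; exact: ltnW.
  by have := h (size q); rewrite size_rcons ltnSn nth_rcons ltnn eqxx; apply.
move=> [h1 h2] i; rewrite size_rcons ltnS leq_eqVlt nth_rcons.
by case/orP => [/eqP->|hi]; [rewrite ltnn eqxx | rewrite hi; apply: h1].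
Qed.

Lemma valid_take p par k : valid p par -> valid p (take k par).
Proof.
move=> h i; rewrite size_take_min leq_min => /andP[hik hi].
by rewrite nth_take //; apply: h.
Qed.

Lemma vertices_mono p i N : (i <= N)%N -> {subset vertices p i <= vertices p N}.
Proof.
move=> hiN [] j; rewrite !mem_vertices.
  by move=> h; apply: leq_trans h (leq_div2r _ hiN).
by case/andP=> -> h; apply: leq_trans h hiN.
Qed.

Lemma valid_sub p par : valid p par -> {subset par <= vertices p (size par)}.
Proof.
move=> h v /(nthP (inl 0%N)) [i hi <-].
exact: (@vertices_mono p i (size par) (ltnW hi) _ (h i hi)).
Qed.

Lemma nblocks_of s m : (forall k, (k \in s) = (k < m)%N) -> nblocks s = m.
Proof.
move=> h; rewrite /nblocks.
have e : undup s =i iota 0 m by move=> k; rewrite mem_undup h mem_iota.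
have := uniq_size_uniq (undup_uniq s) e; rewrite iota_uniq size_iota.
by move/esym/eqP.
Qed.

Lemma count_rcons' (T : Type) (a : pred T) s x :
  count a (rcons s x) = (count a s + a x)%N.
Proof. by rewrite -cats1 count_cat /= addn0. Qed.

Lemma valid_mem p par : valid p par ->
  forall k, (k \in fm par) = (k < count is_inl par)%N.
Proof.
elim/last_ind: par => [|q v IH] hv k; first by [].
move/valid_rcons: hv => [hq hvq].
have IHq := IH hq.
rewrite fm_rcons mem_rcons in_cons count_rcons'.
case: v hvq => j; rewrite mem_vertices /= => hj.
  by rewrite (@nblocks_of _ _ IHq) addn1 ltnS leq_eqVlt -IHq.
move: hj => /andP[j0 jq].
have hin : nth 0%N (fm q) j.-1 \in fm q.
  by apply: mem_nth; rewrite size_fm; case: j j0 jq.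
rewrite addn0 -IHq; case: eqP => [->|//]; by rewrite hin.
Qed.

Lemma valid_nblocks p par : valid p par -> nblocks (fm par) = count is_inl par.
Proof. by move=> h; apply: nblocks_of; apply: (@valid_mem p). Qed.

Lemma lab_rcons_inr q c i : (0 < i <= size q)%N ->
  lab (rcons (fm q) c) (inr i) = lab (fm q) (inr i).
Proof.
move=> /andP[i0 iq] /=; rewrite nth_rcons size_fm.
by case: i i0 iq => // i _ /= ->.
Qed.

Lemma valid_count p par : valid p par -> forall c, (c < count is_inl par)%N ->
  (count (fun v => lab (fm par) v == c) par).+1 = count_mem c (fm par).
Proof.
elim/last_ind: par => [|q v IH] hv c //.
have hv' := hv.
move/valid_rcons: hv => [hq hvq].
have IHq := IH hq.
have hmem := valid_mem hq.
have hnb := valid_nblocks hv'.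
have hnbq := valid_nblocks hq.
have hsub := valid_sub hq.
rewrite count_rcons' => hc.
rewrite count_rcons' fm_rcons count_rcons'.
rewrite fm_rcons count_rcons' in hnb.
set s := fm q in hmem hnb hnbq IHq *.
set m := count is_inl q in hmem hnb hnbq IHq hc *.
have old_inr : forall i, inr i \in q -> lab (rcons s (lab s v)) (inr i) = lab s (inr i).
  by move=> i /hsub; rewrite mem_vertices => hi; apply: lab_rcons_inr.
have old_inr_lt : forall i, inr i \in q -> (lab s (inr i) < m)%N.
  move=> i /hsub; rewrite mem_vertices => /andP[i0 iq] /=.
  by rewrite -hmem; apply: mem_nth; rewrite size_fm; case: i i0 iq.
clear hv'.
case: v hvq hc hnb old_inr => j; rewrite mem_vertices => hj /= hc hnb old_inr.
  rewrite addn1 in hc hnb.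
  have hnbs : nblocks s = m by [].
  rewrite hnbs in hnb old_inr *; rewrite hnb.
  move: hc; rewrite ltnS leq_eqVlt => /orP[/eqP ->|hc].
    have -> : count (fun u => lab (rcons s m) u == m) q = 0%N.
      rewrite -(count_pred0 q); apply: eq_in_count => -[] i hi /=.
        by rewrite hnb (gtn_eqF (ltnSn m)).
      by rewrite (old_inr i hi) (ltn_eqF (old_inr_lt i hi)).
    rewrite eqxx (gtn_eqF (ltnSn m)).
    by have /count_memPn -> : m \notin s by rewrite hmem ltnn.
  have -> : count (fun u => lab (rcons s m) u == c) q =
            count (fun u => lab s u == c) q.
    apply: eq_in_count => -[] i hi /=.
      rewrite hnb (gtn_eqF (leq_trans hc (leqnSn m))).
      apply/esym/negbTE/eqP => e; move: hc; rewrite -e.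
      by rewrite hnbs ltnn.
    by rewrite (old_inr i hi).
  rewrite (gtn_eqF (leq_trans hc (leqnSn m))) !addn0 (gtn_eqF hc) addn0.
  exact: IHq.
rewrite addn0 in hc hnb.
have e1 : nth 0%N (rcons s (nth 0%N s j.-1)) j.-1 = nth 0%N s j.-1.
  exact: (lab_rcons_inr _ hj).
rewrite e1 -addSn -IHq //; congr (_ + _)%N; congr S.
apply: eq_in_count => -[] i hi /=.
  by rewrite hnb hnbq.
by rewrite (old_inr i hi).
Qed.

Section Sums.
Variable R : realFieldType.

Lemma sum_pred1_seq (C : seq nat) (H : nat -> R) x :
  uniq C -> x \in C -> \sum_(c <- C | x == c) H c = H x.
Proof.
elim: C => [|y C IH] //= /andP[yC uC]; rewrite in_cons big_cons.
case: (eqVneq x y) => [-> _|ne /= xC].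
  rewrite ?eqxx big_seq_cond big1 ?addr0 // => c /andP[cC /eqP xc].
  by move: yC; rewrite xc cC.
by rewrite ?(negbTE ne) IH.
Qed.

Lemma lump (V : seq vertex) (lb : vertex -> nat) (C : seq nat)
    (F : vertex -> R) (G : nat -> R) :
  uniq C -> (forall v, v \in V -> lb v \in C) ->
  \sum_(v <- V) F v * G (lb v) = \sum_(c <- C) (\sum_(v <- V | lb v == c) F v) * G c.
Proof.
move=> uC; elim: V => [|v V IH] hV.
  by rewrite big_nil big1 // => c _; rewrite big_nil mul0r.
rewrite big_cons IH; last by move=> u hu; apply: hV; rewrite in_cons hu orbT.
have -> : \sum_(c <- C) (\sum_(u <- v :: V | lb u == c) F u) * G c =
   \sum_(c <- C) ((if lb v == c then F v * G c else 0) +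
                  (\sum_(u <- V | lb u == c) F u) * G c).
  apply: eq_bigr => c _; rewrite big_cons.
  by case: ifP => _ //; rewrite ?mulrDl ?add0r.
rewrite big_split /=; congr (_ + _).
rewrite -big_mkcond /= sum_pred1_seq //; apply: hV; exact: mem_head.
Qed.

Lemma sum_const_seq (T : Type) (r : seq T) (P : pred T) (x : R) :
  \sum_(i <- r | P i) x = (count P r)%:R * x.
Proof.
elim: r => [|y r IH]; first by rewrite big_nil mul0r.
by rewrite big_cons IH /=; case: (P y); rewrite ?add0n // natrD mulrDl mul1r.
Qed.

End Sums.

Lemma sum_count_mem (V par : seq vertex) (P : pred vertex) :
  uniq V -> {subset par <= V} ->
  (\sum_(v <- V | P v) count_mem v par)%N = count P par.
Proof.
move=> uV; elim: par => [|x par IH] hsub.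
  by rewrite big1.
have hx : x \in V by apply: hsub; exact: mem_head.
rewrite /= -IH; last by move=> u hu; apply: hsub; rewrite in_cons hu orbT.
rewrite big_split /=; congr (_ + _)%N.
rewrite big_mkcond /=.
elim: V uV hx {hsub IH} => [|y V IHV] //= /andP[yV uV].
rewrite big_cons in_cons.
case: (eqVneq x y) => [e _|ne /= xV].
  subst y; rewrite ?eqxx /= big1_seq ?addn0; first by case: (P x).
  move=> u /andP[_ uV']; case: (P u) => //; rewrite (_ : (x == u) = false) //.
  by apply: contraNF yV => /eqP ->.
by rewrite IHV // ?(negbTE ne); case: (P y).
Qed.

Lemma count_iota1 (s : seq nat) c :
  count (fun j => nth 0%N s j.-1 == c) (iota 1 (size s)) = count_mem c s.
Proof.
rewrite -[1%N]addn0 iotaDl count_map.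
rewrite -{3}(mkseq_nth 0%N s) /mkseq count_map.
by apply: eq_count => i /=; rewrite add0n.
Qed.

Lemma uniq_vertices p N : uniq (vertices p N).
Proof.
rewrite /vertices cat_uniq; apply/and3P; split.
- by rewrite (map_inj_uniq inl_inj') iota_uniq.
- apply/hasPn => v /mapP[j _ ->]; apply/negP => /mapP[i _ e]; discriminate e.
- by rewrite (map_inj_uniq inr_inj') iota_uniq.
Qed.

Lemma pos_lemma (R : realFieldType) (alpha ell : R) (N n : nat) :
  0 < alpha -> 0 < ell ->
  [/\ 1 + alpha != 0, (1 + alpha) * N%:R + (n + 1)%:R * ell != 0 &
      N%:R + (n + 1)%:R * (ell / (1 + alpha)) != 0].
Proof.
move=> ha hl.
have ha1 : 0 < 1 + alpha by rewrite addr_gt0.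
have hn1 : 0 < (n + 1)%:R :> R by rewrite ltr0n addn1.
split; first by rewrite lt0r_neq0.
  rewrite lt0r_neq0 //; apply: ltr_wpDl; [apply: mulr_ge0 => //; exact: ltW | exact: mulr_gt0].
rewrite lt0r_neq0 //; apply: ltr_wpDl => //; apply: mulr_gt0 => //; exact: divr_gt0.
Qed.

Lemma alg_new (R : realFieldType) (alpha ell X Y M : R) :
  1 + alpha != 0 -> (1 + alpha) * X + Y * ell != 0 ->
  X + Y * (ell / (1 + alpha)) != 0 ->
  (M + (Y * ell + 0 * alpha)) / ((1 + alpha) * X + Y * ell) =
  (Y * (ell / (1 + alpha)) + M * (1 / (1 + alpha))) / (X + Y * (ell / (1 + alpha))).
Proof. by move=> h1 h2 h3; field; rewrite h1 /= [X * _]mulrC.  Qed.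

Lemma alg_old (R : realFieldType) (alpha ell X Y K : R) :
  1 + alpha != 0 -> (1 + alpha) * X + Y * ell != 0 ->
  X + Y * (ell / (1 + alpha)) != 0 ->
  (K + (0 * ell + (K + 1) * alpha)) / ((1 + alpha) * X + Y * ell) =
  ((K + 1) - 1 / (1 + alpha)) / (X + Y * (ell / (1 + alpha))).
Proof. by move=> h1 h2 h3; field; rewrite h1 /= [X * _]mulrC.  Qed.

Lemma block_prob (R : realFieldType) (alpha ell : R) p par c :
  0 < alpha -> 0 < ell -> valid p par -> (c <= nblocks (fm par))%N ->
  \sum_(v <- vertices p (size par) | lab (fm par) v == c)
      gport_prob alpha ell p (size par) par v =
  crp_prob (1 / (1 + alpha)) (ell / (1 + alpha)) p (size par) (fm par) c.
Proof.
move=> ha hl hv hc.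
have [h1 h2 h3] := pos_lemma (size par) (size par %/ p) ha hl.
have hm := valid_nblocks hv.
have hmem := valid_mem hv.
have hsub := valid_sub hv.
have hcnt := valid_count hv.
set N := size par in h2 h3 hsub *.
set s := fm par in hm hmem hcnt hc *.
set m := count is_inl par in hm hmem hcnt.
set n := (N %/ p)%N in h2 h3 *.
set CN := (1 + alpha) * N%:R + (n + 1)%:R * ell in h2.
rewrite (eq_bigr (fun v => ((count_mem v par)%:R +
          (if v is inl _ then ell else alpha)) / CN)); last by case.
rewrite -big_distrl /= big_split /= -natr_sum sum_count_mem ?uniq_vertices //.
rewrite /vertices big_cat !big_map /= !sum_const_seq.
have eN : N = size s by rewrite /s size_fm.
rewrite [in iota 1 N]eN count_iota1.
rewrite /crp_prob -/n hm.
move: hc; rewrite hm leq_eqVlt => /orP[/eqP ->|hc].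
  have -> : count (fun v => lab s v == m) par = m.
    apply: eq_in_count => -[] j /hsub; rewrite mem_vertices /= ?hm ?eqxx //.
    move=> /andP[j0 jN]; apply/negbTE; rewrite neq_ltn -hmem; apply/orP; left.
    by apply: mem_nth; rewrite -eN; case: j j0 jN.
  have -> : count (fun _ => m == m) (iota 0 n.+1) = n.+1.
    by rewrite (eq_count (a2 := predT)) ?count_predT ?size_iota // => j; rewrite eqxx.
  have /count_memPn -> : m \notin s by rewrite hmem ltnn.
  rewrite ltnn /CN -addn1.
  exact: alg_new.
rewrite hc.
have -> : count (fun _ => m == c) (iota 0 n.+1) = 0%N.
  by rewrite (eq_count (a2 := pred0)) ?count_pred0 // => j; rewrite /= gtn_eqF.
rewrite -(hcnt c hc).
set k := count _ par.
rewrite /CN -[k.+1]addn1 [(k + 1)%:R]natrD.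
exact: alg_old.
Qed.

Lemma local_sum (R : realFieldType) (alpha ell : R) p par N (g : seq nat -> R) :
  0 < alpha -> 0 < ell -> valid p par -> size par = N ->
  \sum_(v <- vertices p N) gport_prob alpha ell p N par v * g (fm (rcons par v)) =
  \sum_(c <- iota 0 (nblocks (fm par)).+1)
     crp_prob (1 / (1 + alpha)) (ell / (1 + alpha)) p N (fm par) c * g (rcons (fm par) c).
Proof.
move=> ha hl hv <-.
under eq_bigr do rewrite fm_rcons.
rewrite (@lump _ _ (lab (fm par)) (iota 0 (nblocks (fm par)).+1)
   (fun v => gport_prob alpha ell p (size par) par v) (fun c => g (rcons (fm par) c)))
   ?iota_uniq //.
  rewrite big_seq [RHS]big_seq; apply: eq_bigr => c; rewrite mem_iota add0n ltnS => hc.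
  by rewrite block_prob.
have hmem := valid_mem hv; have hm := valid_nblocks hv.
move=> [] j; rewrite mem_vertices mem_iota add0n ltnS //= => /andP[j0 jN].
apply: ltnW; rewrite hm -hmem; apply: mem_nth; rewrite size_fm; by case: j j0 jN.
Qed.

Lemma gport_support (R : realFieldType) (alpha ell : R) p N x :
  x \in gport_dist alpha ell p N -> valid p x.2 /\ size x.2 = N.
Proof.
elim: N x => [|N IH] x /=.
  by rewrite inE => /eqP -> /=; split => // i.
move/flatten_mapP => [y hy /mapP [v hv ->]] /=.
have [hvy hsy] := IH y hy.
split; last by rewrite size_rcons hsy.
by apply/valid_rcons; split => //; rewrite hsy.
Qed.

Lemma main_ind (R : realFieldType) (alpha ell : R) p :
  0 < alpha -> 0 < ell -> forall n (g : seq nat -> R),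
  \sum_(x <- gport_dist alpha ell p n.+1) x.1 * g (fm x.2) =
  \sum_(y <- crp_dist (1 / (1 + alpha)) (ell / (1 + alpha)) p n.+1) y.1 * g y.2.
Proof.
move=> ha hl; elim=> [|n IH] g.
  have e : gport_prob alpha ell p 0 [::] (inl 0%N) = 1.
    rewrite /gport_prob div0n mulr0 add0r add0n mul1r.
    by rewrite ?mulr0n ?add0r divff // lt0r_neq0.
  have -> : gport_dist alpha ell p 1 =
      [:: (1 * gport_prob alpha ell p 0 [::] (inl 0%N), [:: inl 0%N])].
    by rewrite /gport_dist /gport_step /vertices div0n.
  by rewrite e mul1r !big_cons !big_nil.
set H := fun s => \sum_(c <- iota 0 (nblocks s).+1)
  crp_prob (1 / (1 + alpha)) (ell / (1 + alpha)) p n.+1 s c * g (rcons s c).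
have -> : crp_dist (1 / (1 + alpha)) (ell / (1 + alpha)) p n.+2 =
  crp_step (1 / (1 + alpha)) (ell / (1 + alpha)) p n.+1
     (crp_dist (1 / (1 + alpha)) (ell / (1 + alpha)) p n.+1) by [].
have -> : gport_dist alpha ell p n.+2 =
  gport_step alpha ell p n.+1 (gport_dist alpha ell p n.+1) by [].
rewrite /gport_step /crp_step !big_flatten !big_map.
transitivity (\sum_(x <- gport_dist alpha ell p n.+1) x.1 * H (fm x.2)).
  rewrite big_seq [RHS]big_seq; apply: eq_bigr => x hx.
  have [hv hs] := gport_support hx.
  rewrite big_map /H -(@local_sum R alpha ell p x.2 n.+1 g ha hl hv hs) big_distrr /=.
  by apply: eq_bigr => v _; rewrite mulrA.
rewrite IH; apply: eq_bigr => y _.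
by rewrite big_map /H big_distrr /=; apply: eq_bigr => c _; rewrite mulrA.
Qed.

Lemma BT p q : valid p q -> forall f x, (0 < x <= size q)%N -> (x <= f)%N ->
  [/\ (0 < branch_top f q x <= x)%N,
      is_inl (nth (inl 0%N) q (branch_top f q x).-1) &
      nth 0%N (fm q) x.-1 = nth 0%N (fm q) (branch_top f q x).-1].
Proof.
move=> hv; elim=> [|f IH] x /andP[x0 xq] hf.
  by move: hf; rewrite leqn0 => /eqP hx; rewrite hx in x0.
have hxq : (x.-1 < size q)%N by case: x x0 xq hf.
rewrite /=; case e: (nth (inl 0%N) q x.-1) => [k|j].
  by rewrite x0 leqnn e.
have := hv _ hxq; rewrite e mem_vertices => /andP[j0 jx].
have hjq : (0 < j <= size q)%N by rewrite j0 (leq_trans jx) // ltnW.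
have hjf : (j <= f)%N by rewrite (leq_trans jx) // -ltnS prednK.
have [/andP[t0 tj] ht hst] := IH j hjq hjf.
split => //.
  by rewrite t0 (leq_trans tj) // (leq_trans jx) // leq_pred.
rewrite -hst (nth_fm hxq) e /= -take_fm nth_take //.
by rewrite prednK.
Qed.

Lemma count_take_mono (T : Type) (a : pred T) (s : seq T) i j :
  (i <= j)%N -> (count a (take i s) <= count a (take j s))%N.
Proof.
move=> hij; rewrite -(take_takel s hij).
by rewrite -[X in (_ <= count a X)%N](cat_take_drop i (take j s)) count_cat leq_addr.
Qed.

Lemma label_inl p q i : valid p q -> (i < size q)%N -> is_inl (nth (inl 0%N) q i) ->
  nth 0%N (fm q) i = count is_inl (take i q).
Proof.
move=> hv hi; rewrite (nth_fm hi); case: (nth _ q i) => //= _ _.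
exact: (@valid_nblocks p _ (@valid_take p q i hv)).
Qed.

Lemma INJ p q i j : valid p q -> (i < size q)%N -> (j < size q)%N ->
  is_inl (nth (inl 0%N) q i) -> is_inl (nth (inl 0%N) q j) ->
  nth 0%N (fm q) i = nth 0%N (fm q) j -> i = j.
Proof.
move=> hv hi hj ii ij; rewrite (label_inl hv hi ii) (label_inl hv hj ij).
have strict : forall i j, (i < j)%N -> (i < size q)%N -> is_inl (nth (inl 0%N) q i) ->
    (count is_inl (take i q) < count is_inl (take j q))%N.
  move=> i' j' hij hi' ii'; apply: leq_trans (count_take_mono _ _ hij).
  by rewrite (take_nth (inl 0%N) hi') count_rcons' ii' addn1.
case: (ltngtP i j) => [h|h|//] e.
  by have := strict _ _ h hi ii; rewrite e ltnn.
by have := strict _ _ h hj ij; rewrite e ltnn.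
Qed.

Lemma part_of_key_eq k (key1 key2 : nat -> nat) :
  (forall x y : 'I_k, (key1 x.+1 == key1 y.+1) = (key2 x.+1 == key2 y.+1)) ->
  part_of_key k key1 = part_of_key k key2.
Proof.
move=> h; rewrite /part_of_key; apply: eq_imset => x; apply/setP => y.
by rewrite !inE h.
Qed.

Lemma key_eq p q (x y : nat) : valid p q -> (x < size q)%N -> (y < size q)%N ->
  (crp_key (fm q) x.+1 == crp_key (fm q) y.+1) =
  (gport_key q x.+1 == gport_key q y.+1).
Proof.
move=> hv hx hy; rewrite /crp_key /gport_key.
have [/andP[tx0 txx] itx hsx] := BT hv (x := x.+1) (f := x.+1) hx (leqnn _).
have [/andP[ty0 tyy] ity hsy] := BT hv (x := y.+1) (f := y.+1) hy (leqnn _).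
rewrite hsx hsy.
set tx := branch_top _ _ _ in tx0 txx itx hsx *.
set ty := branch_top _ _ _ in ty0 tyy ity hsy *.
apply/eqP/eqP => [e|->] //.
have htx : (tx.-1 < size q)%N by case: tx tx0 txx {itx hsx e} => // t _ /= h; apply: leq_trans h hx.
have hty : (ty.-1 < size q)%N by case: ty ty0 tyy {ity hsy e} => // t _ /= h; apply: leq_trans h hy.
have := INJ hv htx hty itx ity e.
by move=> h; rewrite -(prednK tx0) -(prednK ty0) h.
Qed.

Lemma crp_gport_part p par k : valid p par -> (k <= size par)%N ->
  crp_part k (fm par) = gport_part k par.
Proof.
move=> hv hk; rewrite /crp_part /gport_part take_fm; apply: part_of_key_eq => x y.
have hq := @valid_take p par k hv.
have hs : size (take k par) = k by rewrite size_takel.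
by apply: (key_eq hq); rewrite hs.
Qed.

Unset Implicit Arguments.

Theorem mainTheorem11 (R : realFieldType) (alpha ell : R) (p : nat)
    (halpha : 0 < alpha) (hell : 0 < ell) (hp : (0 < p)%N) :
  let a := 1 / (1 + alpha) in
  let theta := ell / (1 + alpha) in
  forall N : nat, (1 <= N)%N ->
    (forall P : {set {set 'I_N}},
        crp_law a theta p N P = gport_law alpha ell p N P) /\
    (forall rho : forall k : 'I_N, {set {set 'I_k.+1}},
        crp_path_law a theta p N rho = gport_path_law alpha ell p N rho).
Proof.
move=> a theta [//|n] _; split.
  move=> P; rewrite /crp_law /gport_law /a /theta.
  rewrite -(@main_ind R alpha ell p halpha hell n (fun s => (crp_part n.+1 s == P)%:R)).
  apply: eq_big_seq => x hx; have [hv hs] := gport_support hx.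
  by rewrite (crp_gport_part hv) // hs.
move=> rho; rewrite /crp_path_law /gport_path_law /a /theta.
rewrite -(@main_ind R alpha ell p halpha hell n
   (fun s => [forall k : 'I_n.+1, crp_part k.+1 s == rho k]%:R)).
apply: eq_big_seq => x hx; have [hv hs] := gport_support hx.
rewrite (@eq_forallb _ _ (fun k : 'I_n.+1 => gport_part k.+1 x.2 == rho k)) // => k.
by rewrite (crp_gport_part hv) // hs.
Qed.
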